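(* Let $M$ be a minimal dominating set of a finite tree $T$ and let $v\in a_1(M)$. Let $N=N[v]\cap N_1(M)$ and $M_0=(M\setminus\{v\})\cup N$. Then Algorithm 1 (described below), applied to $T$ rooted at $v$ and the set $M_0$, outputs a minimal dominating set $M_i$ with $|M_i|\ge|M_0|\ge|M|$. Algorithm 1: set $i=0$; while $M_i$ is not a minimal dominating set: choose a supported vertex $u_i\in M_i\setminus a(M_i)$ of least depth; let $A_{i+1}$ be the set of vertices of $a_1(M_i)$ adjacent to $u_i$; let $N_{i+1}$ be the set of vertices of $N_1(M_i)$ adjacent to a vertex of $A_{i+1}$; set $M_{i+1}=(M_i\setminus A_{i+1})\cup N_{i+1}$ and increase $i$ by one. When the loop ends, return $M_i$.
   Context: A dominating set of a graph $G=(V,E)$ is a set $S\subseteq V$ such that every vertex is in $S$ or adjacent to a vertex of $S$; it is minimal if no proper subset is dominating. $N[u]=N(u)\cup\{u\}$ is the closed neighbourhood. For a dominating set $S$: $a(S)=\{u\in S: S\setminus\{u\}\text{ is not dominating}\}$ (critical vertices); vertices of $S\setminus a(S)$ are called supported; $N_1(S)=\{u\in V\setminus S: |N[u]\cap S|=1\}$; $a_1(S)=\{u\in a(S): N[u]\cap N_1(S)\ne\emptyset\}$. In a tree rooted at $v$, depth of a vertex is its distance to $v$. *)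

(* Defs.v *)
From mathcomp Require Import all_boot.
Set Implicit Arguments. Unset Strict Implicit. Unset Printing Implicit Defensive.

Section Graph.
Variables (T : finType) (e : rel T).

Definition simple_graph : Prop := symmetric e /\ irreflexive e.

Definition connected_graph : Prop := forall x y : T, connect e x y.

Definition acyclic_graph : Prop :=
  forall (x : T) (p : seq T),
    uniq (x :: p) -> path e x p -> 2 <= size p -> ~~ e (last x p) x.

Definition is_tree : Prop := simple_graph /\ connected_graph /\ acyclic_graph.

Definition cnbhd (u : T) : {set T} := u |: [set w | e u w].

Definition dominating (S : {set T}) : bool :=
  [forall x : T, cnbhd x :&: S != set0].

Definition minimal_dominating (S : {set T}) : bool :=
  dominating S && [forall S' : {set T}, (S' \proper S) ==> ~~ dominating S'].

Definition crit (S : {set T}) : {set T} := [set u in S | ~~ dominating (S :\ u)].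

Definition N1 (S : {set T}) : {set T} :=
  [set u in ~: S | #|cnbhd u :&: S| == 1].

Definition a1 (S : {set T}) : {set T} :=
  [set u in crit S | cnbhd u :&: N1 S != set0].

Definition walk_len (x y : T) (n : nat) : Prop :=
  exists p : seq T, [/\ path e x p, last x p = y & size p = n].

(* depth(u) <= depth(w) for the tree rooted at r (depth = distance to r) *)
Definition depth_le (r u w : T) : Prop :=
  forall k, walk_len r w k -> exists2 j, j <= k & walk_len r u j.

Definition alg_step (r : T) (M M' : {set T}) : Prop :=
  ~~ minimal_dominating M /\
  exists u : T,
    [/\ u \in M :\: crit M,
        (forall w, w \in M :\: crit M -> depth_le r u w) &
        let A := [set x in a1 M | e u x] in
        let N' := [set y in N1 M | [exists x in A, e x y]] in
        M' = (M :\: A) :|: N'].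

Definition alg_reach (r : T) (M0 M' : {set T}) : Prop :=
  exists (f : nat -> {set T}) (k : nat),
    [/\ f 0 = M0, f k = M' & forall i, i < k -> alg_step r (f i) (f i.+1)].

Definition alg_diverges (r : T) (M0 : {set T}) : Prop :=
  exists f : nat -> {set T}, f 0 = M0 /\ forall i, alg_step r (f i) (f i.+1).

End Graph.

(* Main.v *)
Require Import Defs.
From mathcomp Require Import all_boot zify.
From Stdlib Require Import ClassicalEpsilon.
Set Implicit Arguments. Unset Strict Implicit. Unset Printing Implicit Defensive.
Section Height.
Variables (T : finType) (e : rel T) (v : T).
Hypotheses (esym : symmetric e) (eirr : irreflexive e)
  (econn : connected_graph e) (eacyc : acyclic_graph e).

Definition avoid (z : T) : rel T := [rel x y | [&& e x y, x != z & y != z]].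

Lemma avoid_sym z : symmetric (avoid z).
Proof. move=> x y; rewrite /avoid /= [e x y]esym; by case: (x != z); case: (y != z); rewrite ?andbT ?andbF. Qed.

Lemma avoid_path z x p : path e x p -> (forall y, y \in x :: p -> y != z) -> path (avoid z) x p.
Proof.
elim: p x => [|y p IH] x //= /andP [exy pp] hy.
rewrite {1}/avoid /= exy (hy x) ?inE ?eqxx //= (hy y) ?inE ?eqxx ?orbT //=.
apply: IH => // w hw; apply: hy; by rewrite in_cons hw orbT.
Qed.

Lemma avoid_notin z x p : path (avoid z) x p -> forall y, y \in p -> y != z.
Proof.
elim: p x => [|y p IH] x //= /andP [hxy pp] w.
move: hxy; rewrite /avoid /= => /and3P [_ _ hyz].
rewrite in_cons; case/orP => [/eqP -> //|hw]; exact: IH pp w hw.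
Qed.

Lemma noconn z a b : e z a -> e z b -> a != b -> connect (avoid z) a b -> False.
Proof.
move=> eza ezb nab /connectP [p pp hb].
move: ezb nab; rewrite hb; case: (shortenP pp) => p' pp' up' _ ezb nab.
case: p' pp' up' nab ezb => [|y q] pp' up' nab ezb; first by rewrite /= eqxx in nab.
have hz : z \notin a :: y :: q.
  rewrite in_cons negb_or; apply/andP; split.
    by apply/negP => /eqP zs; subst; rewrite eirr in eza.
  by apply/negP => /(avoid_notin pp'); rewrite eqxx.
have pe : path e a (y :: q).
  by apply: sub_path pp' => s t /and3P [].
have U : uniq (z :: a :: y :: q) by rewrite cons_uniq hz up'.
have P : path e z (a :: y :: q) by apply/andP; split.
have := eacyc U P isT.
by rewrite /= esym; move: ezb => /= ->.
Qed.

Definition wlb (z : T) (n : nat) : bool :=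
  if excluded_middle_informative (walk_len e v z n) then true else false.

Lemma wlbP z n : reflect (walk_len e v z n) (wlb z n).
Proof. rewrite /wlb; case: excluded_middle_informative => H; constructor => //. Qed.

Lemma wl_ex z : exists n, wlb z n.
Proof.
have /connectP [p pp ->] := econn v z.
exists (size p); apply/wlbP; by exists p.
Qed.

Definition hgt (z : T) : nat := ex_minn (wl_ex z).

Lemma hwalk z : walk_len e v z (hgt z).
Proof. rewrite /hgt; case: ex_minnP => n /wlbP //. Qed.

Lemma hmin z n : walk_len e v z n -> hgt z <= n.
Proof. rewrite /hgt; case: ex_minnP => m _ H /wlbP; exact: H. Qed.

Lemma hv : hgt v = 0.
Proof. apply/eqP; rewrite -leqn0; apply: hmin; by exists [::]. Qed.

Lemma hon p y : path e v p -> y \in v :: p -> hgt y <= size p.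
Proof.
move=> pp hy; case/splitPl: hy pp => p1 p2 hl.
rewrite cat_path => /andP [pp1 _].
apply: leq_trans (hmin (n := size p1) _) _; first by exists p1.
by rewrite size_cat leq_addr.
Qed.

Lemma hedge a b : e a b -> hgt b <= (hgt a).+1.
Proof.
move=> eab; case: (hwalk a) => p [pp lp sp].
apply: leq_trans (hmin (n := size (rcons p b)) _) _.
  exists (rcons p b); split => //; first by rewrite rcons_path pp lp eab.
  by rewrite last_rcons.
by rewrite size_rcons sp.
Qed.

Lemma H2 a b z : e a z -> e b z -> hgt a < hgt z -> hgt b < hgt z -> a = b.
Proof.
move=> eaz ebz ha hb; case: (eqVneq a b) => // nab; exfalso.
have cv x : hgt x < hgt z -> connect (avoid z) v x.
  move=> hx; case: (hwalk x) => p [pp lp sp].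
  apply/connectP; exists p => //; apply: avoid_path => // y hy.
  apply/negP => /eqP yz; subst y.
  by have := hon pp hy; rewrite sp leqNgt hx.
have cab : connect (avoid z) a b.
  apply: connect_trans (cv _ hb).
  by rewrite (sym_connect_sym (@avoid_sym z)) cv.
by apply: (noconn (z := z)) cab; rewrite // esym.
Qed.

Lemma hon_strict p y : path e v p -> y \in v :: p -> y != last v p -> hgt y < size p.
Proof.
case/lastP: p => [|p' x] pp hy hl.
  by move: hy hl; rewrite /= inE => ->.
move: pp; rewrite rcons_path => /andP [pp _].
move: hy hl; rewrite -rcons_cons mem_rcons in_cons last_rcons => /orP [-> //|hy] _.
by rewrite size_rcons ltnS (hon pp hy).
Qed.

Lemma H1 a b : e a b -> hgt b = (hgt a).+1 \/ hgt a = (hgt b).+1.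
Proof.
move=> eab; have h1 := hedge eab.
have h2 : hgt a <= (hgt b).+1 by apply: hedge; rewrite esym.
case: (ltngtP (hgt a) (hgt b)) => [lt|gt|eq]; [left; lia | right; lia | exfalso].
have nab : a != b by apply/negP => /eqP ab; subst; rewrite eirr in eab.
case: (hwalk a) => pa [ppa lpa spa].
case/lastP: pa ppa lpa spa => [|p' x] ppa lpa spa.
  case: (hwalk b) => q [pq lq sq].
  move: sq; rewrite -eq -spa; case: q pq lq => // _ /= lq _.
  by move: nab; rewrite -lpa -lq eqxx.
move: ppa; rewrite rcons_path last_rcons in lpa * => /andP [pp' ea'].
subst x.
set a' := last v p' in ea'.
have ha' : hgt a' <= size p' by apply: hon pp' (mem_last _ _).
have sa : hgt a = (size p').+1 by rewrite -spa size_rcons.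
have c1 : connect (avoid a) v a'.
  apply/connectP; exists p' => //; apply: avoid_path => // y hy.
  apply/negP => /eqP ya; subst y.
  by have := hon pp' hy; rewrite sa ltnn.
case: (hwalk b) => q [pq lq sq].
have c2 : connect (avoid a) v b.
  apply/connectP; exists q; last exact: (Logic.eq_sym lq).
  apply: avoid_path => // y hy.
  case: (eqVneq y b) => [-> | yb]; first by rewrite eq_sym.
  apply/negP => /eqP ya; subst y.
  by have := hon_strict pq hy; rewrite lq yb sq eq ltnn => /(_ isT).
apply: (noconn (z := a) (a := a') (b := b)) => //.
- by rewrite esym.
- by apply/negP => /eqP ab; move: ha'; rewrite ab -eq sa ltnn.
- apply: connect_trans c2.
  by rewrite (sym_connect_sym (@avoid_sym a)).
Qed.

End Height.

Lemma height_exists (T : finType) (e : rel T) (v : T) : is_tree e ->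
  exists h : T -> nat, [/\ h v = 0,
     (forall a b, e a b -> h b = (h a).+1 \/ h a = (h b).+1) &
     (forall a b z, e a z -> e b z -> h a < h z -> h b < h z -> a = b)].
Proof.
move=> [[esym eirr] [conn acyc]].
exists (hgt v conn); split.
- exact: hv.
- exact: H1.
- exact: H2.
Qed.

Section Main.
Variables (T : finType) (e : rel T).
Hypotheses (esym : symmetric e) (eirr : irreflexive e).
Variable h : T -> nat.
Hypothesis H1 : forall a b, e a b -> h b = (h a).+1 \/ h a = (h b).+1.
Hypothesis H2 : forall a b z, e a z -> e b z -> h a < h z -> h b < h z -> a = b.

Definition J (M : {set T}) := forall z p, z \in M -> z \notin crit e M -> e p z -> h p < h z -> p \notin M.

Lemma in_cn w x : (w \in cnbhd e x) = (w == x) || e x w.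
Proof. by rewrite !inE. Qed.

Lemma cn_sym x y : (x \in cnbhd e y) = (y \in cnbhd e x).
Proof. by rewrite !in_cn eq_sym esym. Qed.

Lemma cn_self x : x \in cnbhd e x.
Proof. by rewrite in_cn eqxx. Qed.

Lemma cn_e x y : e x y -> y \in cnbhd e x.
Proof. by move=> h0; rewrite in_cn h0 orbT. Qed.

Lemma cn_ne x y : y \in cnbhd e x -> y != x -> e x y.
Proof. by rewrite in_cn => /orP [->|]. Qed.

Lemma domP (S : {set T}) : reflect (forall x, exists2 w, w \in cnbhd e x & w \in S) (dominating e S).
Proof.
apply: (iffP forallP) => H x.
  by have /set0Pn [w] := H x; rewrite inE => /andP [? ?]; exists w.
by case: (H x) => w ? ?; apply/set0Pn; exists w; rewrite inE; apply/andP.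
Qed.

Lemma N1_uniq (M : {set T}) y x1 x2 : y \in N1 e M -> x1 \in cnbhd e y -> x1 \in M ->
  x2 \in cnbhd e y -> x2 \in M -> x1 = x2.
Proof.
rewrite inE => /andP [_ /cards1P [w hw]] h1 m1 h2 m2.
have : x1 \in cnbhd e y :&: M by rewrite inE h1 m1.
have : x2 \in cnbhd e y :&: M by rewrite inE h2 m2.
by rewrite hw !inE => /eqP -> /eqP ->.
Qed.

Lemma N1_notin (M : {set T}) y : y \in N1 e M -> y \notin M.
Proof. by rewrite !inE => /andP []. Qed.

Lemma N1_intro (M : {set T}) y x : y \notin M -> x \in cnbhd e y -> x \in M ->
  (forall w, w \in cnbhd e y -> w \in M -> w = x) -> y \in N1 e M.
Proof.
move=> ny hx mx H; rewrite !inE ny /=; apply/cards1P; exists x.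
apply/setP => w; rewrite in_setI in_set1; apply/idP/idP => [/andP [h1 h2]|/eqP ->].
  by apply/eqP; apply: H.
by rewrite hx mx.
Qed.

Lemma crit_sub (M : {set T}) : crit e M \subset M.
Proof. by apply/subsetP => x; rewrite inE => /andP []. Qed.

Lemma a1_sub (M : {set T}) : a1 e M \subset crit e M.
Proof. by apply/subsetP => x; rewrite inE => /andP []. Qed.

Lemma a1_M (M : {set T}) x : x \in a1 e M -> x \in M.
Proof. by move=> /(subsetP (a1_sub M)) /(subsetP (crit_sub M)). Qed.

Lemma supp (M : {set T}) z : z \in M -> z \notin crit e M -> dominating e (M :\ z).
Proof. by move=> zM; rewrite inE zM /= negbK. Qed.

Lemma crit_elim (M : {set T}) z : dominating e M -> z \in crit e M ->
  exists w, z \in cnbhd e w /\ forall t, t \in cnbhd e w -> t \in M -> t = z.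
Proof.
move=> /domP dM; rewrite inE => /andP [zM].
rewrite /dominating negb_forall => /existsP [w]; rewrite negbK => /eqP hw.
have H : forall t, t \in cnbhd e w -> t \in M -> t = z.
  move=> t ht tM; apply/eqP; apply/negP => /negP tz.
  have : t \in cnbhd e w :&: (M :\ z) by rewrite in_setI ht in_setD1 tz tM.
  by rewrite hw inE.
exists w; split => //.
by case: (dM w) => t ht tM; rewrite -(H t ht tM).
Qed.

Lemma a1_of_crit (M : {set T}) c u : dominating e M -> c \in crit e M -> u \in M -> e c u -> c \in a1 e M.
Proof.
move=> dM cc uM ecu; rewrite inE cc /=.
case: (crit_elim dM cc) => w [cw H].
case: (eqVneq w c) => [wc | wc].
  subst w; have := H u (cn_e ecu) uM => uc; subst u; by rewrite eirr in ecu.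
have ecw : e c w by rewrite esym; apply: cn_ne => //; rewrite eq_sym.
have wM : w \notin M.
  by apply/negP => wM; move: wc; rewrite (H w (cn_self w) wM) eqxx.
apply/set0Pn; exists w; rewrite inE (cn_e ecw) /=.
have cM : c \in M by apply: (subsetP (crit_sub M)).
by apply: (N1_intro (x := c)).
Qed.

Lemma step_gen (M A : {set T}) k :
  dominating e M -> J M -> A \subset a1 e M -> (forall x, x \in A -> h x = k) ->
  (forall x y, x \in A -> e y x -> h y < h x -> y \in M) ->
  (forall x, x \in A -> exists2 w, e x w & w \in (M :\: A) :|: N1 e M) ->
  let N' := [set y in N1 e M | [exists x in A, e x y]] in
  let M' := (M :\: A) :|: N' in
  [/\ dominating e M', J M', #|M| <= #|M'| &
      \sum_(x in M) h x + #|A| <= \sum_(x in M') h x].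
Proof.
move=> dM JM sA hA lowA nbA N' M'.
have AM : forall x, x \in A -> x \in M := fun x hx => a1_M (subsetP sA x hx).
have sAM : A \subset M by apply/subsetP => x /AM.
have N'P : forall y, y \in N' -> [/\ y \in N1 e M, y \notin M & exists2 x, x \in A & e x y].
  move=> y; rewrite inE => /andP [yN /existsP [x /andP [xA exy]]].
  split => //; [exact: N1_notin | by exists x].
have N'I : forall y x, y \in N1 e M -> x \in A -> e x y -> y \in N'.
  by move=> y x yN xA exy; rewrite inE yN /=; apply/existsP; exists x; rewrite xA.
have hN' : forall y, y \in N' -> h y = k.+1.
  move=> y /N'P [_ yM [x xA exy]].
  case: (H1 exy) => [->|hx]; first by rewrite (hA x xA).
  have yM' : y \in M by apply: (lowA x y xA); [rewrite esym | rewrite hx].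
  by rewrite yM' in yM.
have inM' : forall y, (y \in M') = ((y \in M) && (y \notin A)) || (y \in N').
  by move=> y; rewrite /M' in_setU in_setD andbC.
have dM' : dominating e M'.
  move/domP: (dM) => dMP.
  apply/domP => x; case: (dMP x) => m xm mM.
  case: (boolP (m \in A)) => mA; last by exists m; rewrite // inM' mM mA.
  case: (boolP (x \in M)) => xM.
    case: (boolP (x \in A)) => xA; last by exists x; rewrite ?cn_self // inM' xM xA.
    case: (nbA x xA) => w exw; rewrite in_setU => /orP [wMA | wN].
      by exists w; [exact: cn_e | rewrite /M' in_setU wMA].
    exists w; first exact: cn_e.
    by rewrite inM' (N'I w x wN xA exw) orbT.
  case: (boolP [exists m', (m' \in cnbhd e x) && (m' \in M) && (m' \notin A)]).
    move/existsP => [m' /andP [/andP [h1 h2] h3]]; exists m' => //.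
    by rewrite inM' h2 h3.
  rewrite negb_exists => /forallP allA.
  have nxm : m != x by apply/negP => /eqP mx; subst m; rewrite mM in xM.
  have exm : e x m := cn_ne xm nxm.
  have hxm : h m < h x.
    case: (H1 exm) => [hmx | ->]; last exact: ltnSn.
    have : x \in M by apply: (lowA m x mA) => //; rewrite hmx.
    by rewrite (negbTE xM).
  have xN : x \in N1 e M.
    apply: (N1_intro (x := m)) => // w xw wM.
    have wA : w \in A by move: (allA w); rewrite xw wM /= negbK.
    have nxw : w != x by apply/negP => /eqP wx; subst w; rewrite wM in xM.
    have exw : e x w := cn_ne xw nxw.
    apply: (H2 (z := x)).
    - by rewrite esym.
    - by rewrite esym.
    - by rewrite (hA w wA) -(hA m mA).
    - exact: hxm.
  exists x; first exact: cn_self.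
  by rewrite inM' (N'I x m xN mA) ?orbT // esym.
have JM' : J M'.
  move=> z p zM' zc epz hpz.
  have /domP dz := supp zM' zc.
  move: zM'; rewrite inM' => /orP [/andP [zM zA] | zN].
  - case: (boolP (z \in crit e M)) => zcM.
    + case: (crit_elim dM zcM) => w [zw Hw].
      case: (dz w) => t tw; rewrite in_setD1 => /andP [tz tM'].
      move: tM'; rewrite inM' => /orP [/andP [tM _] | tN].
        by move: tz; rewrite (Hw t tw tM) eqxx.
      case: (N'P t tN) => tN1 tnM [x xA ext].
      have xM := AM x xA.
      have ht := hN' t tN.
      have zx : z != x by apply/negP => /eqP zx; subst; rewrite xA in zA.
      have xt : x \in cnbhd e t by apply: cn_e; rewrite esym.
      case: (eqVneq t w) => [tw' | ntw].
        subst t; by move: zx; rewrite (N1_uniq tN1 zw zM xt xM) eqxx.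
      have ewt : e w t := cn_ne tw ntw.
      have wM : w \notin M.
        apply/negP => wM; have wz := Hw w (cn_self w) wM; subst w.
        have zt : z \in cnbhd e t by apply: cn_e; rewrite esym.
        by move: zx; rewrite (N1_uniq tN1 zt zM xt xM) eqxx.
      have wx : w != x by apply/negP => /eqP wx; subst; rewrite xM in wM.
      have hw : h w = k.+2.
        case: (H1 ewt) => [htw | -> ]; last by rewrite ht.
        have wx' : w = x.
          by apply: (H2 (z := t)) => //; [rewrite htw ltnSn | rewrite ht (hA x xA) ltnSn].
        by move: wx; rewrite wx' eqxx.
      have zw' : z != w by apply/negP => /eqP zw'; subst; rewrite zM in wM.
      have ewz : e w z := cn_ne zw zw'.
      have zt : z != t by apply/negP => /eqP zt; subst; rewrite zM in tnM.
      have hz : h z = k.+3.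
        case: (H1 ewz) => [-> | hwz]; first by rewrite hw.
        have zt' : z = t.
          apply: (H2 (z := w)); [by rewrite esym | by rewrite esym | by rewrite hwz ltnSn |].
          by rewrite hw ht ltnSn.
        by move: zt; rewrite zt' eqxx.
      have pw : p = w.
        by apply: (H2 (z := z)) => //; rewrite hz hw ltnSn.
      subst p; rewrite inM' (negbTE wM) /=; apply/negP => /hN'; rewrite hw => E.
      exact: (n_Sn (k.+1) (Logic.eq_sym E)).
    + have pM := JM z p zM zcM epz hpz.
      rewrite inM' (negbTE pM) /=; apply/negP => pN.
      case: (N'P p pN) => pN1 _ [x xA exp].
      have xp : x \in cnbhd e p by apply: cn_e; rewrite esym.
      have := N1_uniq pN1 (cn_e epz) zM xp (AM x xA) => zx; subst x.
      by rewrite xA in zA.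
  - exfalso; case: (N'P z zN) => zN1 znM [x xA exz].
    case: (dz z) => t tz; rewrite in_setD1 => /andP [ntz tM'].
    have ezt : e z t := cn_ne tz ntz.
    move: tM'; rewrite inM' => /orP [/andP [tM tA] | tN].
      have xz : x \in cnbhd e z by apply: cn_e; rewrite esym.
      have := N1_uniq zN1 tz tM xz (AM x xA) => tx; subst t.
      by rewrite xA in tA.
    case: (H1 ezt); rewrite (hN' t tN) (hN' z zN) => E.
      exact: (n_Sn (k.+1) E).
    exact: (n_Sn (k.+1) E).
have cardA : #|A| <= #|N'|.
  pose g x := odflt x [pick y in cnbhd e x :&: N1 e M].
  have gP : forall x, x \in A -> g x \in N' /\ x \in cnbhd e (g x).
    move=> x xA; rewrite /g; case: pickP => [y /= | none].
      rewrite in_setI => /andP [xy yN].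
      have yx : y != x.
        by apply/negP => /eqP yx; subst y; move: (N1_notin yN); rewrite (AM x xA).
      have exy := cn_ne xy yx.
      split; first exact: (N'I y x yN xA exy).
      by apply: cn_e; rewrite esym.
    exfalso; have := subsetP sA x xA; rewrite inE => /andP [_ /set0Pn [y hy]].
    by have := none y; rewrite hy.
  have ginj : {in A &, injective g}.
    move=> x1 x2 h1 h2 geq.
    case: (gP x1 h1) => g1 c1; case: (gP x2 h2) => _ c2.
    case: (N'P _ g1) => gN _ _.
    by move: c2; rewrite -geq => c2; exact: (N1_uniq gN c1 (AM _ h1) c2 (AM _ h2)).
  rewrite -(card_in_imset ginj); apply: subset_leq_card.
  by apply/subsetP => y /imsetP [x xA ->]; case: (gP x xA).
have disj : (M :\: A) :&: N' = set0.
  apply/setP => y; rewrite in_setI in_setD in_set0.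
  case: (boolP (y \in N')) => yN; rewrite ?andbF //.
  by case: (N'P y yN) => _ /negbTE -> _; rewrite andbF.
have cM' : #|M'| = #|M :\: A| + #|N'|.
  by have := cardsUI (M :\: A) N'; rewrite disj cards0 addn0.
have cM : #|M| = #|A| + #|M :\: A|.
  by rewrite -(cardsID A M) (setIidPr sAM).
have sM : \sum_(x in M) h x = \sum_(x in A) h x + \sum_(x in M :\: A) h x.
  by rewrite (big_setID A) /= (setIidPr sAM).
have sM' : \sum_(x in M') h x = \sum_(x in M :\: A) h x + \sum_(x in N') h x.
  rewrite (big_setID (M :\: A)) /=.
  have -> : M' :&: (M :\: A) = M :\: A by rewrite /M' setUK.
  have -> : M' :\: (M :\: A) = N'.
    apply/setP => y; rewrite in_setD /M' in_setU.
    case: (boolP (y \in M :\: A)) => //= yMA.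
    by symmetry; apply/negbTE; apply/negP => yN; move: disj => /setP /(_ y); rewrite in_setI yMA yN in_set0.
  by [].
have sA' : \sum_(x in A) h x = #|A| * k.
  by rewrite -sum_nat_const; apply: eq_bigr => x xA; rewrite hA.
have sN : \sum_(x in N') h x = #|N'| * k.+1.
  by rewrite -sum_nat_const; apply: eq_bigr => x xN; rewrite hN'.
split => //.
- by rewrite cM cM' addnC leq_add2l.
- rewrite sM sM' sA' sN addnAC -mulnSr [_ + \sum_(x in _) _]addnC leq_add2l.
  by rewrite leq_mul2r cardA orbT.
Qed.


Lemma alg_step_inv r (M M' : {set T}) : dominating e M -> J M -> alg_step e r M M' ->
  [/\ dominating e M', J M', #|M| <= #|M'| & \sum_(x in M) h x < \sum_(x in M') h x].
Proof.
move=> dM JM [_ [u [uS _ HM']]].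
move: HM' => /= HM'.
move: uS; rewrite in_setD => /andP [ucr uM].
set A := [set x in a1 e M | e u x] in HM'.
have hA : forall x, x \in A -> h x = (h u).+1.
  move=> x; rewrite inE => /andP [xa eux]; have xM := a1_M xa.
  case: (H1 eux) => // hux; exfalso.
  have := JM u x uM ucr (etrans (esym x u) eux) (etrans (f_equal (fun n => h x < n) hux) (ltnSn _)).
  by rewrite xM.
have lowA : forall x y, x \in A -> e y x -> h y < h x -> y \in M.
  move=> x y xA eyx hyx; move: (xA); rewrite inE => /andP [xa eux].
  have -> // : y = u.
  apply: (H2 (z := x)) => //.
  by rewrite (hA x xA) ltnSn.
have uA : u \notin A.
  by rewrite inE; apply/negP => /andP [/(subsetP (a1_sub M)) uc _]; rewrite uc in ucr.
have nbA : forall x, x \in A -> exists2 w, e x w & w \in (M :\: A) :|: N1 e M.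
  move=> x xA; move: (xA); rewrite inE => /andP [_ eux].
  by exists u; [rewrite esym | rewrite in_setU in_setD uA uM].
have Ane : 0 < #|A|.
  have /domP := supp uM ucr => /(_ u) [w uw]; rewrite in_setD1 => /andP [wu wM].
  have euw : e u w := cn_ne uw wu.
  have hw : h w = (h u).+1.
    case: (H1 euw) => // huw; exfalso.
    have := JM u w uM ucr (etrans (esym w u) euw) (etrans (f_equal (fun n => h w < n) huw) (ltnSn _)).
    by rewrite wM.
  have wc : w \in crit e M.
    apply/negP => /negP wnc.
    have := JM w u wM wnc euw (etrans (f_equal (fun n => h u < n) hw) (ltnSn _)).
    by rewrite uM.
  have wa : w \in a1 e M by apply: (a1_of_crit dM wc uM); rewrite esym.
  by apply/card_gt0P; exists w; rewrite inE wa euw.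
have sA : A \subset a1 e M by apply/subsetP => x; rewrite inE => /andP [].
have [d' J' c' s'] := step_gen dM JM sA hA lowA nbA.
rewrite HM'; split => //.
apply: leq_trans s'; by rewrite -addn1 leq_add2l.
Qed.

Lemma init_inv (M : {set T}) v : minimal_dominating e M -> v \in a1 e M -> h v = 0 ->
  let M0 := (M :\ v) :|: (cnbhd e v :&: N1 e M) in
  [/\ dominating e M0, J M0 & #|M| <= #|M0|].
Proof.
move=> /andP [dM /forallP minM] va hv M0.
have JM : J M.
  move=> z p zM zc; exfalso; move: zc; rewrite inE zM /= negbK.
  by move: (minM (M :\ z)); rewrite (properD1 zM) /= => /negbTE ->.
have vM := a1_M va.
have s1 : [set v] \subset a1 e M by rewrite sub1set.
have s2 : forall x, x \in [set v] -> h x = 0 by move=> x /set1P ->.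
have s3 : forall x y, x \in [set v] -> e y x -> h y < h x -> y \in M.
  by move=> x y /set1P ->; rewrite hv.
have s4 : forall x, x \in [set v] -> exists2 w, e x w & w \in (M :\: [set v]) :|: N1 e M.
  move=> x /set1P ->; move: (va); rewrite inE => /andP [_ /set0Pn [y]].
  rewrite in_setI => /andP [vy yN].
  have yv : y != v by apply/negP => /eqP yv; subst y; move: (N1_notin yN); rewrite vM.
  by exists y; [exact: cn_ne | rewrite in_setU yN orbT].
have [d' J' c' _] := step_gen dM JM s1 s2 s3 s4.
have -> : M0 = (M :\: [set v]) :|: [set y in N1 e M | [exists x in [set v], e x y]].
  rewrite /M0; congr (_ :|: _); apply/setP => y; rewrite in_setI inE.
  have -> : [exists x in [set v], e x y] = e v y.
    apply/existsP/idP => [[x /andP [/set1P -> //]] | evy].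
    by exists v; rewrite set11.
  case yN: (y \in N1 e M); rewrite ?andbF //= andbT in_cn.
  have yv : y != v by apply/negP => /eqP yv; subst y; move: (N1_notin yN); rewrite vM.
  by rewrite (negbTE yv).
by split.
Qed.

Lemma run_inv (M0 : {set T}) (f : nat -> {set T}) r : dominating e M0 -> J M0 -> f 0 = M0 ->
  forall n, (forall i, i < n -> alg_step e r (f i) (f i.+1)) ->
  [/\ dominating e (f n), J (f n), #|M0| <= #|f n| & n <= \sum_(x in f n) h x].
Proof.
move=> d0 J0 f0; elim=> [|n IH] st; first by rewrite f0.
have [dn Jn cn sn] := IH (fun i hi => st i (leqW hi)).
have [d' J' c' s'] := alg_step_inv dn Jn (st n (ltnSn n)).
split => //; [exact: leq_trans cn c' | exact: leq_ltn_trans sn s'].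
Qed.

Lemma sum_bound (S : {set T}) : \sum_(x in S) h x <= \sum_(x : T) h x.
Proof.
rewrite big_mkcond /=; apply: leq_sum => x _; case: ifP => // _.
Qed.

Lemma final (M : {set T}) v : minimal_dominating e M -> v \in a1 e M -> h v = 0 ->
  let M0 := (M :\ v) :|: (cnbhd e v :&: N1 e M) in
  [/\ (forall M', alg_reach e v M0 M' -> dominating e M'),
      ~ alg_diverges e v M0,
      (forall M', alg_reach e v M0 M' -> minimal_dominating e M' -> #|M0| <= #|M'|)
    & #|M| <= #|M0|].
Proof.
move=> minM va hv M0.
have [d0 J0 c0] := init_inv minM va hv.
split => //.
- move=> M' [f [n [f0 fn st]]].
  have [dn _ _ _] := run_inv d0 J0 f0 st.
  by rewrite -fn.
- move=> [f [f0 st]].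
  have [_ _ _ sn] := run_inv d0 J0 f0 (n := (\sum_(x : T) h x).+1) (fun i _ => st i).
  by have := leq_trans sn (sum_bound _); rewrite ltnn.
- move=> M' [f [n [f0 fn st]]] _.
  have [_ _ cn _] := run_inv d0 J0 f0 st.
  by rewrite -fn.
Qed.

End Main.

Theorem theorem4p5 (T : finType) (e : rel T) (M : {set T}) (v : T) :
  is_tree e ->
  minimal_dominating e M ->
  v \in a1 e M ->
  let M0 := (M :\ v) :|: (cnbhd e v :&: N1 e M) in
  [/\ (* the algorithm never gets stuck: every iterate is dominating,
         so a non-minimal one has a supported vertex *)
      (forall M', alg_reach e v M0 M' -> dominating e M'),
      (* the algorithm terminates, whatever choices are made *)
      ~ alg_diverges e v M0,
      (* every output is a minimal dominating set of size >= |M0| *)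
      (forall M', alg_reach e v M0 M' -> minimal_dominating e M' -> #|M0| <= #|M'|)
    & #|M| <= #|M0|].
Proof.
move=> tree minM va.
have [[esym eirr] _] := tree.
have [h [hv h1 h2]] := height_exists v tree.
exact: (final esym eirr h1 h2 minM va hv).
Qed.
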